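(* Let $\pi,\tau\in S_n$ with $d(\pi,\tau)=t$, and let $\lambda=\lambda(\pi)$, $\mu=\lambda(\tau)$. Then \[\Delta(\lambda,\mu)\le t\sqrt{n/2}.\]
   Context: Permutations are written in one-line notation. For $\pi\in S_n$, $\lambda(\pi)$ denotes the shape of the tableaux associated with $\pi$ by the RSK correspondence. The distance $d(\pi,\tau)$ is the least number of adjacent transpositions $(k,k+1)$, $1\le k\le n-1$, whose successive left multiplication transforms $\pi$ into $\tau$. For partitions $\lambda,\mu$ of $n$ (parts padded with zeros), $\Delta(\lambda,\mu)=\frac12\sum_{i=1}^n|\lambda_i-\mu_i|$. *)

(* Defs.v *)
From mathcomp Require Import all_boot all_order all_algebra all_fingroup.
Set Implicit Arguments. Unset Strict Implicit. Unset Printing Implicit Defensive.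
Import Order.TTheory GRing.Theory Num.Theory.

Definition row_bump (r : seq nat) (x : nat) : option (seq nat * nat) :=
  let i := find (fun y => x < y) r in
  if i < size r then Some (set_nth 0 r i x, nth 0 r i) else None.

(* Insertion of x into a tableau (list of rows, top row first). *)
Fixpoint rsk_insert (T : seq (seq nat)) (x : nat) : seq (seq nat) :=
  match T with
  | [::] => [:: [:: x]]
  | r :: T' =>
      match row_bump r x with
      | None => rcons r x :: T'
      | Some (r', y) => r' :: rsk_insert T' y
      end
  end.

Definition rsk_P (w : seq nat) : seq (seq nat) := foldl rsk_insert [::] w.

(* One-line notation of pi in S_n (values shifted to 0..n-1). *)
Definition one_line n (pi : 'S_n) : seq nat := [seq val (pi i) | i <- enum 'I_n].

Definition rsk_shape n (pi : 'S_n) : seq nat := map size (rsk_P (one_line pi)).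

(* Left multiplication of pi by a transposition (i j):
   x |-> (i j)(pi x).  In MathComp, (p * q) x = q (p x), so this is
   pi * tperm i j. *)
Definition left_mul_tperm n (ij : 'I_n * 'I_n) (pi : 'S_n) : 'S_n :=
  pi * tperm ij.1 ij.2.

(* pi can be turned into tau by t successive left multiplications by
   adjacent transpositions (k,k+1) (pairs (i,j) of 'I_n with j = i+1,
   i.e. k ranges over 1..n-1 in the paper's 1-based indexing). *)
Definition adj_reach n (t : nat) (pi tau : 'S_n) : Prop :=
  exists ks : seq ('I_n * 'I_n),
    [/\ size ks = t, all (fun ij => val ij.2 == (val ij.1).+1) ks &
        foldl (fun p ij => left_mul_tperm ij p) pi ks = tau].

Definition adj_dist n (pi tau : 'S_n) (t : nat) : Prop :=
  adj_reach t pi tau /\ forall t', adj_reach t' pi tau -> t <= t'.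

Definition Delta (R : numDomainType) n (la mu : seq nat) : R :=
  (\sum_(i < n) `|((nth 0 la i)%:R - (nth 0 mu i)%:R : R)|) / 2%:R.

(* Main.v *)
Require Import Defs.
From mathcomp Require Import all_boot all_order all_algebra all_fingroup.
From mathcomp Require Import zify.
Import Order.TTheory GRing.Theory Num.Theory.
Set Implicit Arguments. Unset Strict Implicit. Unset Printing Implicit Defensive.
From mathcomp Require Import lra.
Definition read (T : seq (seq nat)) : seq nat := flatten (rev T).

Definition famP (k : nat) (w : seq nat) (F : seq (seq nat)) : bool :=
  [&& size F <= k, all (fun s => subseq s w && sorted ltn s) F & uniq (flatten F)].

Lemma famP_perm k w F G : perm_eq F G -> famP k w F = famP k w G.
Proof.
move=> pFG; rewrite /famP (perm_size pFG) (perm_all _ pFG).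
by rewrite (perm_uniq (perm_flatten pFG)).
Qed.

Lemma size_flatten_perm (F G : seq (seq nat)) : perm_eq F G ->
  size (flatten F) = size (flatten G).
Proof. by move=> pFG; apply: perm_size; apply: perm_flatten. Qed.

Lemma subseq_filt (w s : seq nat) : uniq w -> subseq s w -> s = [seq t <- w | t \in s].
Proof. by move=> U /(subseq_uniqP U). Qed.

Lemma subseq_swap (s u v : seq nat) a b :
  uniq (u ++ a :: b :: v) -> subseq s (u ++ a :: b :: v) ->
  ~~ ((a \in s) && (b \in s)) -> subseq s (u ++ b :: a :: v).
Proof.
move=> U S nab; have E := subseq_filt U S.
have -> : s = [seq t <- u ++ b :: a :: v | t \in s].
  rewrite {1}E !filter_cat /=.
  by case: (a \in s) nab; case: (b \in s).
exact: filter_subseq.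
Qed.

Lemma sorted_pair (s u v : seq nat) a b :
  uniq (u ++ a :: b :: v) -> subseq s (u ++ a :: b :: v) -> sorted ltn s ->
  a \in s -> b \in s -> a < b.
Proof.
move=> U S so ia ib; have E := subseq_filt U S.
have : sorted ltn [:: a; b].
  apply: (subseq_sorted ltn_trans _ so); rewrite E filter_cat /= ia ib.
  rewrite -[[:: a; b]]cat0s; apply: cat_subseq; first exact: sub0seq.
  exact: (prefix_subseq [:: a; b]).
by rewrite /= andbT.
Qed.

Lemma sorted_cat_cons (C E : seq nat) y :
  sorted ltn (C ++ y :: E) = sorted ltn (rcons C y) && path ltn y E.
Proof.
case: C => [|c C] //=.
by rewrite cat_path rcons_path /= andbA.
Qed.

Lemma rcons_sorted_le (A : seq nat) x y :
  sorted ltn (rcons A x) -> x < y -> sorted ltn (rcons A y).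
Proof.
case: A => [|a A] //=; rewrite !rcons_path => /andP[-> h] xy /=.
exact: ltn_trans h xy.
Qed.

Lemma uniq_mid (p q : seq nat) x : uniq (p ++ x :: q) = (x \notin p ++ q) && uniq (p ++ q).
Proof.
have P : perm_eq (p ++ [:: x] ++ q) ([:: x] ++ p ++ q) by rewrite perm_catCA.
by rewrite -cat1s (perm_uniq P).
Qed.

Lemma uniq_replace (p q : seq nat) x y :
  uniq (p ++ x :: q) -> y \notin p ++ x :: q -> uniq (p ++ y :: q).
Proof.
rewrite !uniq_mid => /andP[_ ->]; rewrite andbT !mem_cat in_cons.
by case: (y \in p); case: (y \in q); rewrite ?orbT.
Qed.
Lemma perm6 (A B C D E : seq nat) (x y z : nat) :
  perm_eq ((C ++ y :: z :: B) ++ (A ++ x :: D) ++ E) ((A ++ x :: z :: B) ++ (C ++ y :: D) ++ E).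
Proof.
apply/seq.permP => t; rewrite !count_cat /=.
move: (count t A) (count t B) (count t C) (count t D) (count t E) => a b c d e.
case: (t x); case: (t y); case: (t z) => /=; lia.
Qed.

Lemma all_swap (F : seq (seq nat)) u v a b : uniq (u ++ a :: b :: v) ->
  ~~ has (fun s => (a \in s) && (b \in s)) F ->
  all (fun s => subseq s (u ++ a :: b :: v) && sorted ltn s) F ->
  all (fun s => subseq s (u ++ b :: a :: v) && sorted ltn s) F.
Proof.
move=> U /hasPn nF /allP aF; apply/allP => s sF.
have /andP[ss ->] := aF s sF; rewrite andbT.
by apply: subseq_swap => //; exact: nF.
Qed.

Lemma notin_flatten (F : seq (seq nat)) a s : a \notin flatten F -> s \in F -> a \notin s.
Proof. by move=> H sF; apply/negP => ias; move/negP: H; apply; apply/flattenP; exists s. Qed.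

Lemma perm7 (A B C D E : seq nat) (x y z : nat) :
  perm_eq ((A ++ x :: y :: D) ++ (C ++ z :: B) ++ E) ((A ++ x :: z :: B) ++ (C ++ y :: D) ++ E).
Proof.
apply/seq.permP => t; rewrite !count_cat /=.
move: (count t A) (count t B) (count t C) (count t D) (count t E) => a b c d e.
case: (t x); case: (t y); case: (t z) => /=; lia.
Qed.
Lemma uniq_disj (a b : seq nat) t : uniq (a ++ b) -> t \in a -> t \notin b.
Proof. by rewrite cat_uniq => /and3P[_ /hasPn H _] ta; apply/negP => tb; move: (H t tb); rewrite /= ta. Qed.

Lemma subseq_cons2 (s t : seq nat) a : subseq s t -> subseq (a :: s) (a :: t).
Proof. by rewrite /= eqxx. Qed.

Lemma subseq_skip (s t : seq nat) a : subseq s t -> subseq s (a :: t).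
Proof. by move=> h; apply: (subseq_trans h); exact: subseq_cons. Qed.

Lemma ks1_fwd k u v x y z F : x < y -> y < z -> uniq (u ++ y :: x :: z :: v) ->
  famP k (u ++ y :: x :: z :: v) F ->
  exists F', famP k (u ++ y :: z :: x :: v) F' /\ size (flatten F') = size (flatten F).
Proof.
move=> xy yz U fF; have xz : x < z by exact: ltn_trans xy yz.
have e1 : u ++ y :: x :: z :: v = (u ++ [:: y]) ++ x :: z :: v by rewrite -catA.
have e2 : u ++ y :: z :: x :: v = (u ++ [:: y]) ++ z :: x :: v by rewrite -catA.
case: (boolP (has (fun s => (x \in s) && (z \in s)) F)) => [hF | nF]; last first.
  exists F; split => //; move: fF; rewrite /famP => /and3P[-> /allP aF ->]; rewrite andbT /=.
  apply/allP => s sF; have /andP[ss ->] := aF s sF; rewrite andbT e2.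
  by apply: subseq_swap; [rewrite -e1 | rewrite -e1 | exact: (hasPn nF s sF)].
case/hasP: hF => s0 s0F /andP[xs0 zs0].
have P0 := perm_to_rem s0F; rewrite (famP_perm _ _ P0) in fF.
rewrite (size_flatten_perm P0).
move: (rem s0 F) fF => F1 /and3P[szF /= /andP[/andP[s0w s0so] /allP aF1] UF].
have ys0 : y \notin s0.
  apply/negP => ys0; have := sorted_pair (u:=u) (v:= z::v) U s0w s0so ys0 xs0.
  by rewrite ltnNge ltnW.
have E0 := subseq_filt U s0w; rewrite filter_cat /= (negbTE ys0) xs0 zs0 in E0.
have As : subseq [seq t <- u | t \in s0] u by exact: filter_subseq.
have Bs : subseq [seq t <- v | t \in s0] v by exact: filter_subseq.
move: As Bs E0; move: [seq t <- u | t \in s0] [seq t <- v | t \in s0] => A B As Bs E0.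
subst s0.
move: s0so; rewrite sorted_cat_cons => /andP[sAx /= /andP[_ pzB]].
case: (boolP (y \in flatten F1)) => yF1.
  case/flattenP: yF1 => s1 s1F1 ys1.
  have P1 := perm_to_rem s1F1; move: (rem s1 F1) P1 => R P1.
  have UF' : uniq ((A ++ x :: z :: B) ++ s1 ++ flatten R).
    have Q : perm_eq ((A ++ x :: z :: B) ++ flatten F1) ((A ++ x :: z :: B) ++ s1 ++ flatten R).
      by rewrite perm_cat2l (perm_flatten P1).
    by rewrite -(perm_uniq Q).
  have /andP[s1w s1so] := aF1 s1 s1F1.
  have xs1 : x \notin s1.
    by apply: (uniq_disj (b := s1) (a := A ++ x :: z :: B)); [move: UF'; rewrite catA cat_uniq => /andP[] | rewrite mem_cat in_cons eqxx orbT].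
  have zs1 : z \notin s1.
    by apply: (uniq_disj (b := s1) (a := A ++ x :: z :: B)); [move: UF'; rewrite catA cat_uniq => /andP[] | rewrite mem_cat !in_cons eqxx !orbT].
  have E1 := subseq_filt U s1w; rewrite filter_cat /= ys1 (negbTE xs1) (negbTE zs1) in E1.
  have Cs : subseq [seq t <- u | t \in s1] u by exact: filter_subseq.
  have Ds : subseq [seq t <- v | t \in s1] v by exact: filter_subseq.
  move: Cs Ds E1; move: [seq t <- u | t \in s1] [seq t <- v | t \in s1] => C D Cs Ds E1.
  subst s1.
  move: s1so; rewrite sorted_cat_cons => /andP[sCy pyD].
  have PP : perm_eq (flatten [:: C ++ y :: z :: B, A ++ x :: D & R])
                    ((A ++ x :: z :: B) ++ (C ++ y :: D) ++ flatten R).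
    by exact: perm6.
  exists [:: C ++ y :: z :: B, A ++ x :: D & R]; split; last first.
    by rewrite (perm_size PP) /= !size_cat (perm_size (perm_flatten P1)) /= !size_cat.
  apply/and3P; split.
  - by move: szF; rewrite /= (perm_size P1).
  - rewrite /= !sorted_cat_cons /= sCy yz pzB sAx (path_le ltn_trans xy pyD) /= !andbT.
    apply/and3P; split.
    + by rewrite e2 -catA /=; apply: cat_subseq => //=; rewrite eqxx /= eqxx; exact: subseq_skip.
    + apply: cat_subseq => //=; rewrite (ltn_eqF xy) /= (ltn_eqF xz) /= eqxx.
      exact: Ds.
    + have xR : x \notin flatten R.
        have := @uniq_disj _ _ x UF'; rewrite mem_cat in_cons eqxx orbT => /(_ isT).
        by rewrite mem_cat negb_or => /andP[].
      rewrite e2; apply: all_swap; first by rewrite -e1.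
        by apply/hasPn => s sR; rewrite (negbTE (notin_flatten xR sR)).
      by apply/allP => s sR; rewrite -e1; apply: (aF1 s); rewrite (perm_mem P1) in_cons sR orbT.
  - by rewrite (perm_uniq PP).
exists [:: A ++ y :: z :: B & F1]; split; last by rewrite /= !size_cat.
apply/and3P; split => //=.
- rewrite sorted_cat_cons /= yz pzB (rcons_sorted_le sAx xy) /= !andbT.
  rewrite e2 -catA /=; apply/andP; split; last first.
    rewrite e2; apply: all_swap; first by rewrite -e1.
      by apply/hasPn => s sF1; rewrite (negbTE (notin_flatten (uniq_disj UF xs0) sF1)).
    by apply/allP => s sF1; rewrite -e1; exact: aF1.
  by apply: cat_subseq => //=; rewrite eqxx /= eqxx; exact: subseq_skip.
- rewrite -catA /=; apply: (uniq_replace (x := x)); first by move: UF; rewrite -catA.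
  have -> : A ++ x :: z :: B ++ flatten F1 = (A ++ x :: z :: B) ++ flatten F1 by rewrite -catA.
  by rewrite mem_cat negb_or ys0 yF1.
Qed.
Lemma ks2_fwd k u v x y z F : x < y -> y < z -> uniq (u ++ x :: z :: y :: v) ->
  famP k (u ++ x :: z :: y :: v) F ->
  exists F', famP k (u ++ z :: x :: y :: v) F' /\ size (flatten F') = size (flatten F).
Proof.
move=> xy yz U fF; have xz : x < z by exact: ltn_trans xy yz.
have e3 : u ++ x :: z :: y :: v = (u ++ [:: x]) ++ z :: y :: v by rewrite -catA.
case: (boolP (has (fun s => (x \in s) && (z \in s)) F)) => [hF | nF]; last first.
  exists F; split => //; move: fF; rewrite /famP => /and3P[-> aF ->]; rewrite andbT /=.
  by apply: all_swap.
case/hasP: hF => s0 s0F /andP[xs0 zs0].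
have P0 := perm_to_rem s0F; rewrite (famP_perm _ _ P0) in fF.
rewrite (size_flatten_perm P0).
move: (rem s0 F) fF => F1 /and3P[szF /= /andP[/andP[s0w s0so] /allP aF1] UF].
have ys0 : y \notin s0.
  apply/negP => ys0; move: U s0w; rewrite e3 => U' s0w'.
  by have := sorted_pair U' s0w' s0so zs0 ys0; rewrite ltnNge ltnW.
have E0 := subseq_filt U s0w; rewrite filter_cat /= (negbTE ys0) xs0 zs0 in E0.
have As : subseq [seq t <- u | t \in s0] u by exact: filter_subseq.
have Bs : subseq [seq t <- v | t \in s0] v by exact: filter_subseq.
move: As Bs E0; move: [seq t <- u | t \in s0] [seq t <- v | t \in s0] => A B As Bs E0.
subst s0.
move: s0so; rewrite sorted_cat_cons => /andP[sAx /= /andP[_ pzB]].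
have sub1 : forall D, subseq D v -> subseq (A ++ x :: y :: D) (u ++ z :: x :: y :: v).
  move=> D Ds; apply: cat_subseq => //; apply: subseq_skip.
  by do 2 apply: subseq_cons2.
have xF1 : x \notin flatten F1 by apply: (uniq_disj UF); rewrite mem_cat in_cons eqxx orbT.
case: (boolP (y \in flatten F1)) => yF1.
  case/flattenP: yF1 => s1 s1F1 ys1.
  have P1 := perm_to_rem s1F1; move: (rem s1 F1) P1 => R P1.
  have UF' : uniq ((A ++ x :: z :: B) ++ s1 ++ flatten R).
    have Q : perm_eq ((A ++ x :: z :: B) ++ flatten F1) ((A ++ x :: z :: B) ++ s1 ++ flatten R).
      by rewrite perm_cat2l (perm_flatten P1).
    by rewrite -(perm_uniq Q).
  have /andP[s1w s1so] := aF1 s1 s1F1.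
  have xs1 : x \notin s1.
    by apply: (uniq_disj (b := s1) (a := A ++ x :: z :: B)); [move: UF'; rewrite catA cat_uniq => /andP[] | rewrite mem_cat in_cons eqxx orbT].
  have zs1 : z \notin s1.
    by apply: (uniq_disj (b := s1) (a := A ++ x :: z :: B)); [move: UF'; rewrite catA cat_uniq => /andP[] | rewrite mem_cat !in_cons eqxx !orbT].
  have E1 := subseq_filt U s1w; rewrite filter_cat /= ys1 (negbTE xs1) (negbTE zs1) in E1.
  have Cs : subseq [seq t <- u | t \in s1] u by exact: filter_subseq.
  have Ds : subseq [seq t <- v | t \in s1] v by exact: filter_subseq.
  move: Cs Ds E1; move: [seq t <- u | t \in s1] [seq t <- v | t \in s1] => C D Cs Ds E1.
  subst s1.
  move: s1so; rewrite sorted_cat_cons => /andP[sCy pyD].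
  have PP : perm_eq (flatten [:: A ++ x :: y :: D, C ++ z :: B & R])
                    ((A ++ x :: z :: B) ++ (C ++ y :: D) ++ flatten R).
    by exact: perm7.
  exists [:: A ++ x :: y :: D, C ++ z :: B & R]; split; last first.
    by rewrite (perm_size PP) /= !size_cat (perm_size (perm_flatten P1)) /= !size_cat.
  apply/and3P; split.
  - by move: szF; rewrite /= (perm_size P1).
  - rewrite /= !sorted_cat_cons /= sAx xy pyD (rcons_sorted_le sCy yz) pzB /= !andbT.
    apply/and3P; split.
    + exact: sub1.
    + apply: cat_subseq => //; apply: subseq_cons2; do 2 apply: subseq_skip; exact: Bs.
    + apply: all_swap => //; last first.
        by apply/allP => s sR; apply: (aF1 s); rewrite (perm_mem P1) in_cons sR orbT.
      apply/hasPn => s sR; rewrite (negbTE (notin_flatten xF1 _)) //.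
      by rewrite (perm_mem P1) in_cons sR orbT.
  - by rewrite (perm_uniq PP).
exists [:: A ++ x :: y :: B & F1]; split; last by rewrite /= !size_cat.
apply/and3P; split => //=.
- rewrite sorted_cat_cons /= xy sAx (path_le ltn_trans yz pzB) /= sub1 //=.
  apply: all_swap => //; last exact/allP.
  by apply/hasPn => s sF1; rewrite (negbTE (notin_flatten xF1 sF1)).
- have -> : (A ++ x :: y :: B) ++ flatten F1 = (A ++ [:: x]) ++ y :: (B ++ flatten F1) by rewrite -!catA.
  apply: (uniq_replace (x := z)); first by move: UF; rewrite -!catA.
  have -> : (A ++ [:: x]) ++ z :: B ++ flatten F1 = (A ++ x :: z :: B) ++ flatten F1 by rewrite -!catA.
  by rewrite mem_cat negb_or ys0 yF1.
Qed.
Inductive kstep : seq nat -> seq nat -> Prop :=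
| KS1 u v x y z : x < y -> y < z -> kstep (u ++ y :: x :: z :: v) (u ++ y :: z :: x :: v)
| KS2 u v x y z : x < y -> y < z -> kstep (u ++ x :: z :: y :: v) (u ++ z :: x :: y :: v).

Lemma kstep_perm w1 w2 : kstep w1 w2 -> perm_eq w1 w2.
Proof.
case=> u v x y z _ _; rewrite perm_cat2l; apply/seq.permP => t /=;
case: (t x); case: (t y); case: (t z) => /=; lia.
Qed.

Lemma kstep_bwd k w1 w2 F : kstep w1 w2 -> uniq w1 -> famP k w2 F -> famP k w1 F.
Proof.
move=> ks U; have U2 : uniq w2 by rewrite -(perm_uniq (kstep_perm ks)).
case: ks U U2 => u v x y z xy yz U U2; rewrite /famP => /and3P[-> aF ->]; rewrite andbT /=.
- have e1 : u ++ y :: x :: z :: v = (u ++ [:: y]) ++ x :: z :: v by rewrite -catA.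
  have e2 : u ++ y :: z :: x :: v = (u ++ [:: y]) ++ z :: x :: v by rewrite -catA.
  rewrite e1; apply: all_swap; rewrite -?e2 //.
  apply/hasPn => s sF; apply/negP => /andP[zs xs].
  have /andP[ss so] := allP aF s sF.
  move: U2 ss; rewrite e2 => U2 ss.
  by have := sorted_pair U2 ss so zs xs; rewrite ltnNge ltnW // (ltn_trans xy yz).
- apply: all_swap => //.
  apply/hasPn => s sF; apply/negP => /andP[zs xs].
  have /andP[ss so] := allP aF s sF.
  by have := sorted_pair U2 ss so zs xs; rewrite ltnNge ltnW // (ltn_trans xy yz).
Qed.

Lemma kstep_fwd k w1 w2 F : kstep w1 w2 -> uniq w1 -> famP k w1 F ->
  exists F', famP k w2 F' /\ size (flatten F') = size (flatten F).
Proof. by case=> u v x y z xy yz U fF; [apply: ks1_fwd | apply: ks2_fwd]. Qed.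

Inductive knuth : seq nat -> seq nat -> Prop :=
| KnR w : knuth w w
| KnS w1 w2 w3 : kstep w1 w2 \/ kstep w2 w1 -> knuth w2 w3 -> knuth w1 w3.

Lemma knuth_trans w1 w2 w3 : knuth w1 w2 -> knuth w2 w3 -> knuth w1 w3.
Proof. by elim=> // a b c h _ IH /IH; apply: KnS. Qed.

Lemma knuth_sym w1 w2 : knuth w1 w2 -> knuth w2 w1.
Proof.
elim=> [w|a b c h _ IH]; first exact: KnR.
apply: (knuth_trans IH); apply: (KnS (w2 := a)); last exact: KnR.
by case: h; [right | left].
Qed.

Lemma knuth1 w1 w2 : kstep w1 w2 -> knuth w1 w2.
Proof. by move=> h; apply: (KnS (or_introl h)); exact: KnR. Qed.

Lemma knuth1' w1 w2 : kstep w2 w1 -> knuth w1 w2.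
Proof. by move=> h; apply: (KnS (or_intror h)); exact: KnR. Qed.

Lemma kstep_cat a b w1 w2 : kstep w1 w2 -> kstep (a ++ w1 ++ b) (a ++ w2 ++ b).
Proof.
case=> u v x y z xy yz.
- have -> : a ++ (u ++ y :: x :: z :: v) ++ b = (a ++ u) ++ y :: x :: z :: (v ++ b) by rewrite -!catA.
  have -> : a ++ (u ++ y :: z :: x :: v) ++ b = (a ++ u) ++ y :: z :: x :: (v ++ b) by rewrite -!catA.
  exact: KS1.
- have -> : a ++ (u ++ x :: z :: y :: v) ++ b = (a ++ u) ++ x :: z :: y :: (v ++ b) by rewrite -!catA.
  have -> : a ++ (u ++ z :: x :: y :: v) ++ b = (a ++ u) ++ z :: x :: y :: (v ++ b) by rewrite -!catA.
  exact: KS2.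
Qed.

Lemma knuth_cat a b w1 w2 : knuth w1 w2 -> knuth (a ++ w1 ++ b) (a ++ w2 ++ b).
Proof.
elim=> [w|c d e h _ IH]; first exact: KnR.
apply: (KnS _ IH); case: h => h; [left | right]; exact: kstep_cat.
Qed.

Lemma knuth_perm w1 w2 : knuth w1 w2 -> perm_eq w1 w2.
Proof.
elim=> // a b c h _ IH; apply: (perm_trans _ IH).
by case: h => h; [exact: kstep_perm | rewrite perm_sym; exact: kstep_perm].
Qed.

Lemma knuth_fam k w1 w2 F : knuth w1 w2 -> uniq w1 -> famP k w1 F ->
  exists F', famP k w2 F' /\ size (flatten F') = size (flatten F).
Proof.
move=> kn; elim: kn F => [w F _ fF|a b c h kn IH F U fF]; first by exists F.
have Ub : uniq b.
  by case: h => h; [rewrite -(perm_uniq (kstep_perm h)) | rewrite (perm_uniq (kstep_perm h))].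
case: h => h.
- have [F1 [f1 e1]] := kstep_fwd h U fF.
  have [F2 [f2 e2]] := IH F1 Ub f1; exists F2; split => //; by rewrite e2.
- have f1 := kstep_bwd h Ub fF.
  have [F2 [f2 e2]] := IH F Ub f1; by exists F2.
Qed.
Lemma move_x_left (q r : seq nat) h x :
  sorted ltn (h :: q) -> x < h -> knuth (h :: q ++ x :: r) (h :: x :: q ++ r).
Proof.
elim: q h => [|b q IH] h /=; first by move=> _ _; exact: KnR.
move=> /andP[hb sbq] xh.
have xb : x < b by exact: ltn_trans xh hb.
have K1 := knuth_cat [:: h] [::] (IH b sbq xb); rewrite /= !cats0 in K1.
apply: (knuth_trans K1); apply: knuth1'.
exact: (@KS1 [::] (q ++ r) x h b).
Qed.

Lemma sorted_rcons2 (R : seq nat) a m : sorted ltn (rcons (rcons R a) m) ->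
  sorted ltn (rcons R a) /\ a < m.
Proof.
case: R => [|c R] /=; first by rewrite andbT.
by rewrite rcons_path last_rcons => /andP[p am]; split.
Qed.

Lemma move_y_left (R1 : seq nat) y m t :
  sorted ltn (rcons R1 m) -> m < y -> knuth (R1 ++ y :: m :: t) (y :: R1 ++ m :: t).
Proof.
elim/last_ind: R1 m t => [|R a IH] m t; first by move=> _ _; exact: KnR.
move=> /sorted_rcons2[sRa am] my.
rewrite !cat_rcons.
apply: (knuth_trans (knuth1 (@KS2 R t a m y am my))).
exact: (IH a (m :: t) sRa (ltn_trans am my)).
Qed.

Lemma sorted_rcons_all (R : seq nat) x : sorted ltn R -> all (fun r => r < x) R ->
  sorted ltn (rcons R x).
Proof.
case: R => [|c R] // sR aR; move: sR; rewrite /= rcons_path => -> /=.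
exact: (allP aR _ (mem_last c R)).
Qed.
Lemma row_knuth (R : seq nat) x : sorted ltn R -> x \notin R ->
  find (fun y => x < y) R < size R ->
  knuth (R ++ [:: x]) (nth 0 R (find (fun y => x < y) R) :: set_nth 0 R (find (fun y => x < y) R) x).
Proof.
move=> sR xR; set i := find _ R => iR.
have xy : x < nth 0 R i by apply: (nth_find 0 (a := fun y => x < y)); rewrite has_find.
have ER : R = take i R ++ nth 0 R i :: drop i.+1 R by rewrite -(drop_nth 0 iR) cat_take_drop.
rewrite set_nthE iR.
have sy : sorted ltn (nth 0 R i :: drop i.+1 R) by rewrite -(drop_nth 0 iR); exact: drop_sorted.
have aR1 : all (fun r => r < x) (take i R).
  apply/allP => r /(nthP 0) [j]; rewrite size_take iR => ji <-.
  rewrite nth_take //.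
  have := before_find 0 ji; rewrite -/i => /negbT; rewrite -leqNgt leq_eqVlt => /orP[/eqP e|] //.
  by move: xR; rewrite -e mem_nth // (ltn_trans ji iR).
have sR1x := sorted_rcons_all (take_sorted i sR) aR1.
move: sy xy sR1x; move: (nth 0 R i) (take i R) (drop i.+1 R) ER => y R1 R2 -> sy xy sR1x.
rewrite -catA /=.
apply: (knuth_trans (w2 := R1 ++ y :: x :: R2)).
  have := knuth_cat R1 [::] (move_x_left [::] sy xy); by rewrite !cats0.
exact: move_y_left sR1x xy.
Qed.

Lemma read_cons (r : seq nat) T : read (r :: T) = read T ++ r.
Proof. by rewrite /read rev_cons flatten_rcons. Qed.

Lemma ins_knuth T x : all (sorted ltn) T -> uniq (read T ++ [:: x]) ->
  knuth (read T ++ [:: x]) (read (rsk_insert T x)).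
Proof.
elim: T x => [|r T IH] x /=; first by move=> _ _; exact: KnR.
move=> /andP[sr sT]; rewrite read_cons /row_bump -catA => U.
case: ifP => iR /=; last by rewrite read_cons cats1; exact: KnR.
rewrite read_cons.
have xr : x \notin r.
  have U' : uniq (r ++ [:: x]) := subseq_uniq (suffix_subseq (read T) (r ++ [:: x])) U.
  by move: U'; rewrite cats1 rcons_uniq => /andP[].
apply: (knuth_trans (w2 := read T ++ nth 0 r (find (fun y => x < y) r) :: set_nth 0 r (find (fun y => x < y) r) x)).
  by have := knuth_cat (read T) [::] (row_knuth sr xr iR); rewrite !cats0.
rewrite -cat1s catA.
have := knuth_cat [::] (set_nth 0 r (find (fun y => x < y) r) x) (IH (nth 0 r (find (fun y => x < y) r)) sT _).
apply.
apply: (subseq_uniq _ U); apply: cat_subseq; first exact: subseq_refl.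
by rewrite sub1seq mem_cat mem_nth.
Qed.
Definition rowlt (r c : seq nat) : bool :=
  (size c <= size r) && all (fun j => nth 0 r j < nth 0 c j) (iota 0 (size c)).

Fixpoint valid (T : seq (seq nat)) : bool :=
  match T with
  | [::] => true
  | r :: T' => [&& sorted ltn r, rowlt r (head [::] T') & valid T']
  end.

Definition insrow (c : seq nat) (y : nat) : seq nat :=
  if find (fun z => y < z) c < size c then set_nth 0 c (find (fun z => y < z) c) y
  else rcons c y.

Lemma valid_sorted T : valid T -> all (sorted ltn) T.
Proof. by elim: T => //= r T IH /and3P[-> _ /IH]. Qed.

Lemma head_ins T y : head [::] (rsk_insert T y) = insrow (head [::] T) y.
Proof. by case: T => [|c T] //=; rewrite /row_bump /insrow; case: ifP. Qed.

Lemma take_find_lt (c : seq nat) y : y \notin c ->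
  all (fun r => r < y) (take (find (fun z => y < z) c) c).
Proof.
move=> yc; apply/allP => r /(nthP 0) [j].
rewrite size_take; set i := find _ c => ji <-.
have ji' : j < i by move: ji; case: ifP => // /negbT; rewrite -leqNgt => h1 h; exact: leq_trans h h1.
rewrite nth_take //.
have := before_find 0 ji'; rewrite -/i => /negbT; rewrite -leqNgt leq_eqVlt => /orP[/eqP e|] //.
by move: yc; rewrite -e mem_nth // (leq_trans ji' (find_size _ _)).
Qed.

Lemma sorted_insrow c y : sorted ltn c -> y \notin c -> sorted ltn (insrow c y).
Proof.
move=> sc yc; have aT := take_find_lt yc; rewrite /insrow.
set i := find _ c in aT *; case: ifP => iC.
  rewrite set_nthE iC sorted_cat_cons (sorted_rcons_all (take_sorted i sc) aT) /=.
  have yci : y < nth 0 c i by apply: (nth_find 0 (a := fun z => y < z)); rewrite has_find.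
  have := drop_sorted i sc; rewrite (drop_nth 0 iC) /=.
  by move=> h; apply: (path_le ltn_trans _ h); exact: yci.
have ei : i = size c by apply/eqP; rewrite eqn_leq find_size leqNgt iC.
by move: aT; rewrite ei take_size => aT; exact: sorted_rcons_all.
Qed.

Lemma size_insrow c y : size (insrow c y) =
  if find (fun z => y < z) c < size c then size c else (size c).+1.
Proof.
rewrite /insrow; case: ifP => iC; last by rewrite size_rcons.
by rewrite size_set_nth; apply/maxn_idPr.
Qed.

Lemma nth_insrow c y j : j < size (insrow c y) ->
  nth 0 (insrow c y) j = if j == find (fun z => y < z) c then y else nth 0 c j.
Proof.
rewrite size_insrow /insrow; case: ifP => iC jS; first by rewrite nth_set_nth.
have ei : find (fun z => y < z) c = size c by apply/eqP; rewrite eqn_leq find_size leqNgt iC.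
rewrite nth_rcons ei; case: ltngtP => //.
by move=> h; move: jS; rewrite ltnS leqNgt h.
Qed.

Lemma rowltP r c : reflect (size c <= size r /\ forall j, j < size c -> nth 0 r j < nth 0 c j) (rowlt r c).
Proof.
apply: (iffP andP) => [[h /allP a]|[h a]]; split => //.
- by move=> j jc; apply: a; rewrite mem_iota.
- by apply/allP => j; rewrite mem_iota => /andP[_ jc]; apply: a.
Qed.

Lemma rowlt_pair r c x : rowlt r c -> sorted ltn r -> sorted ltn c -> x \notin r ->
  find (fun z => x < z) r < size r ->
  nth 0 r (find (fun z => x < z) r) \notin c ->
  rowlt (set_nth 0 r (find (fun z => x < z) r) x) (insrow c (nth 0 r (find (fun z => x < z) r))).
Proof.
move=> /rowltP[scr ltrc] sr sc xr; set i := find _ r => ir; set y := nth 0 r i => yc.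
have xy : x < y by apply: (nth_find 0 (a := fun z => x < z)); rewrite has_find.
set i' := find (fun z => y < z) c.
have i'i : i' <= i.
  case: (ltnP i (size c)) => ic; last exact: (leq_trans (find_size _ _) ic).
  rewrite leqNgt; apply/negP => h; have := before_find 0 h; rewrite /= (ltrc i ic) //.
apply/rowltP; split.
  rewrite size_insrow size_set_nth (maxn_idPr ir) -/i'; case: ifP => // hi.
  have ei : i' = size c by apply/eqP; rewrite eqn_leq find_size leqNgt hi.
  by rewrite -ei (leq_ltn_trans i'i ir).
move=> j js; rewrite nth_insrow // nth_set_nth /= -/i'.
have jr : j < size r.
  move: js; rewrite size_insrow -/i'; case: ifP => [_ h|hi h]; first exact: leq_trans h scr.
  have ei : i' = size c by apply/eqP; rewrite eqn_leq find_size leqNgt hi.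
  by move: h; rewrite ltnS leq_eqVlt => /orP[/eqP ->|h]; [rewrite -ei (leq_ltn_trans i'i ir) | exact: leq_trans h scr].
case: (j =P i') => [ji'|ji'].
  case: (j =P i) => [_|ji]; first exact: xy.
  have jlti : j < i by rewrite ltn_neqAle; apply/andP; split; [apply/eqP | rewrite ji'].
  exact: (sorted_ltn_nth ltn_trans 0 sr j i).
have jc : j < size c.
  move: js; rewrite size_insrow -/i'; case: ifP => // hi; rewrite ltnS leq_eqVlt => /orP[/eqP e|//].
  have ei : i' = size c by apply/eqP; rewrite eqn_leq find_size leqNgt hi.
  by case: ji'; rewrite ei.
case: (j =P i) => [ji|_]; last exact: ltrc.
by rewrite ji; apply: (ltn_trans xy); rewrite /y; apply: ltrc; rewrite -ji.
Qed.
Lemma perm_read T : perm_eq (read T) (flatten T).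
Proof. by apply: perm_flatten; apply/seq.permP => p; rewrite count_rev. Qed.

Lemma ins_valid T x : valid T -> uniq (x :: flatten T) -> valid (rsk_insert T x).
Proof.
elim: T x => [|r T IH] x /=; first by move=> _ _; rewrite /rowlt.
move=> /and3P[sr rl vT] /andP[xrT UrT]; rewrite /row_bump.
have xr : x \notin r by move: xrT; rewrite mem_cat negb_or => /andP[].
have UT : uniq (flatten T) by move: UrT; rewrite cat_uniq => /and3P[].
have dis : forall t, t \in r -> t \notin flatten T by move=> t; apply: uniq_disj.
case: ifP => iR /=.
  set y := nth 0 r _.
  have yr : y \in r by exact: mem_nth.
  apply/and3P; split.
  - by have := sorted_insrow sr xr; rewrite /insrow iR.
  - rewrite head_ins; apply: rowlt_pair => //.
    + by case: T vT {IH dis UrT xrT UT rl} => //= c T /and3P[].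
    + case: T vT {IH UrT xrT UT rl} dis => //= c T _ dis.
      by apply/negP => yc; move: (dis y yr); rewrite mem_cat yc.
  - by apply: IH => //=; rewrite UT andbT dis.
apply/and3P; split => //.
- by have := sorted_insrow sr xr; rewrite /insrow iR.
- move/rowltP: rl => [h1 h2]; apply/rowltP; split; first by rewrite size_rcons (leq_trans h1).
  by move=> j jc; rewrite nth_rcons (leq_trans jc h1); exact: h2.
Qed.

Lemma rsk_inv w : uniq w -> valid (rsk_P w) /\ knuth w (read (rsk_P w)).
Proof.
elim/last_ind: w => [|w x IH]; first by move=> _; split => //; exact: KnR.
rewrite rcons_uniq => /andP[xw Uw]; have [vP kP] := IH Uw.
have pw := knuth_perm kP.
rewrite /rsk_P foldl_rcons -/(rsk_P w); split.
  apply: ins_valid => //=; rewrite -(perm_uniq (perm_read _)) -(perm_uniq pw) Uw andbT.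
  by rewrite -(perm_mem (perm_read _)) -(perm_mem pw).
apply: (knuth_trans (w2 := read (rsk_P w) ++ [:: x])).
  by have := knuth_cat [::] [:: x] kP; rewrite /= cats1.
apply: ins_knuth; first exact: valid_sorted.
by rewrite cats1 rcons_uniq -(perm_uniq pw) -(perm_mem pw) xw Uw.
Qed.
Definition Lam (k : nat) (T : seq (seq nat)) : nat := sumn (take k (map size T)).
Definition nonE (r : seq nat) : bool := r != [::].
Definition heads (T : seq (seq nat)) : seq nat := map (head 0) (filter nonE T).

Lemma mem_subseq_flatten (X : seq (seq nat)) r : r \in X -> subseq r (flatten X).
Proof.
elim: X => //= c X IH; rewrite in_cons => /orP[/eqP ->|/IH h].
  exact: prefix_subseq.
by apply: (subseq_trans h); exact: suffix_subseq.
Qed.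

Lemma famA T k : uniq (read T) -> all (sorted ltn) T ->
  famP k (read T) (take k T) /\ size (flatten (take k T)) = Lam k T.
Proof.
move=> U aT; split; last by rewrite size_flatten /shape map_take.
apply/and3P; split.
- by rewrite size_take; case: ifP => // /negbT; rewrite -leqNgt.
- apply/allP => r /mem_take rT; rewrite (allP aT r rT) andbT.
  by apply: mem_subseq_flatten; rewrite mem_rev.
- have : uniq (flatten T) by rewrite -(perm_uniq (perm_read T)).
  by rewrite -{1}(cat_take_drop k T) flatten_cat cat_uniq => /andP[].
Qed.

Lemma valid_nil_rest T : valid ([::] :: T) -> all (fun r => r == [::]) T.
Proof.
elim: T => //= c T IH /andP[/rowltP[h _] v].
have c0 : c = [::] by case: c h v.
move: v; rewrite c0 /= => v; exact: IH.
Qed.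

Lemma count_nonE_nil T : all (fun r => r == [::]) T -> count nonE T = 0.
Proof. by elim: T => //= c T IH /andP[/eqP -> /IH ->]. Qed.

Lemma count_take_le (a : pred (seq nat)) k s : count a (take k s) <= count a s.
Proof. by rewrite -{2}(cat_take_drop k s) count_cat leq_addr. Qed.

Lemma count_take_nonE T k : valid T -> count nonE (take k T) = minn k (count nonE T).
Proof.
elim: T k => [|r T IH] k /=; first by rewrite minn0.
case: k => [|k] /=; first by rewrite min0n.
case: (altP (r =P [::])) => [r0|rn] /= v.
  move: v; rewrite r0 => /valid_nil_rest /count_nonE_nil h.
  rewrite /nonE eqxx /= !add0n h minn0.
  by apply/eqP; rewrite -leqn0 -h count_take_le.
move: v => /and3P[_ _ v]; rewrite /nonE rn /= !add1n IH //.
by rewrite minnSS.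
Qed.

Lemma Lam_behead k T : Lam k T = Lam k (map behead T) + count nonE (take k T).
Proof.
elim: T k => [|r T IH] [|k] //=; rewrite /Lam /= in IH *.
rewrite IH; case: r => //= a r; rewrite /nonE /=; lia.
Qed.

Lemma size_flatten_behead T : size (flatten T) = size (flatten (map behead T)) + count nonE T.
Proof.
elim: T => //= r T IH; rewrite !size_cat IH; case: r => //= a r; rewrite /nonE /=; lia.
Qed.

Lemma valid_behead T : valid T -> valid (map behead T).
Proof.
elim: T => //= r T IH /and3P[sr rl vT]; apply/and3P; split.
- by rewrite -drop1; exact: drop_sorted.
- case: T rl vT {IH} => [|c T] //= /rowltP[h1 h2] _; apply/rowltP; split.
    by rewrite !size_behead; lia.
  by move=> j; rewrite size_behead !nth_behead => jc; apply: h2; lia.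
- exact: IH.
Qed.

Lemma flatten_rows_eq T r1 r2 (a : nat) : uniq (flatten T) -> r1 \in T -> r2 \in T ->
  a \in r1 -> a \in r2 -> r1 = r2.
Proof.
elim: T => //= c T IH; rewrite cat_uniq => /and3P[_ /hasPn dj UT].
rewrite !in_cons => /orP[/eqP->|h1] /orP[/eqP->|h2] a1 a2 //.
- have : a \in flatten T by apply/flattenP; exists r2.
  by move=> aT; move: (dj a aT); rewrite /= a1.
- have : a \in flatten T by apply/flattenP; exists r1.
  by move=> aT; move: (dj a aT); rewrite /= a2.
- exact: IH.
Qed.

Lemma read_behead T : uniq (read T) ->
  read (map behead T) = [seq a <- read T | a \notin heads T].
Proof.
move=> U; have UT : uniq (flatten T) by rewrite -(perm_uniq (perm_read T)).
rewrite /read filter_flatten map_rev; congr (flatten (rev _)).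
apply/eq_in_map => r rT; case: r rT => [|h r'] //= rT.
have hH : h \in heads T by apply/mapP; exists (h :: r') => //; rewrite mem_filter rT.
rewrite hH /=; apply/esym/all_filterP/allP => a ar'; apply/negP => /mapP[r2].
rewrite mem_filter => /andP[r2n r2T] ah.
have ar2 : a \in r2 by case: r2 r2n {r2T} ah => //= b r2 _ ->; exact: mem_head.
have ahr : a \in h :: r' by rewrite in_cons ar' orbT.
have e := flatten_rows_eq UT rT r2T ahr ar2.
have Ur : uniq (h :: r') by apply: (subseq_uniq (mem_subseq_flatten rT) UT).
move: Ur; rewrite /= => /andP[hr' _]; move: ah; rewrite -e /= => ah.
by move: hr'; rewrite -ah ar'.
Qed.

Lemma heads_nil T : all (fun r => r == [::]) T -> heads T = [::].
Proof. by elim: T => //= c T IH /andP[/eqP -> /IH]; rewrite /heads /=. Qed.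

Lemma heads_cons r T : heads (r :: T) = if r == [::] then heads T else head 0 r :: heads T.
Proof. by rewrite /heads /= /nonE; case: eqP. Qed.

Lemma heads_gt T r : valid (r :: T) -> r != [::] -> all (fun h => head 0 r < h) (heads T).
Proof.
elim: T r => [|c T IH] r; first by rewrite /heads.
move=> /= /and3P[sr /rowltP[h1 h2] vcT] rn; rewrite heads_cons.
case: eqP => [c0|/eqP cn].
  by move: vcT; rewrite c0 => /valid_nil_rest /heads_nil ->.
have rc : head 0 r < head 0 c.
  by rewrite -!nth0; apply: h2; case: c cn {h1 vcT}.
rewrite /= rc /=; apply/allP => h hT.
by apply: (ltn_trans rc); exact: (allP (IH c vcT cn) h hT).
Qed.

Lemma mem_heads T a : a \in heads T -> a \in flatten T.
Proof.
move=> /mapP[r]; rewrite mem_filter => /andP[rn rT] ->.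
apply/flattenP; exists r => //; case: r rn {rT} => //= b r _; exact: mem_head.
Qed.
Lemma col_count T s : valid T -> uniq (read T) -> subseq s (read T) -> sorted ltn s ->
  count (fun a => a \in heads T) s <= 1.
Proof.
elim: T s => [|r T IH] s.
  by move=> _ _ S _; have /eqP -> : s == [::] by rewrite -subseq0; exact: S.
move=> v U S so; move: (v) => /= /and3P[sr rl vT].
rewrite read_cons in U S.
have E := subseq_filt U S; rewrite filter_cat in E.
have UT : uniq (read T) by move: U; rewrite cat_uniq => /and3P[].
have Ur : uniq r by move: U; rewrite cat_uniq => /and3P[].
have dis : forall a, a \in r -> a \notin read T.
  by move=> a ar; apply: (uniq_disj (a := r)); first rewrite uniq_catC.
have S1 : subseq [seq t <- read T | t \in s] (read T) := filter_subseq _ _.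
have S2 : subseq [seq t <- r | t \in s] r := filter_subseq _ _.
move: S1 S2 E; move: [seq t <- read T | t \in s] [seq t <- r | t \in s] => s1 s2 S1 S2 E.
subst s.
move: so; rewrite sorted_pairwise; last exact: ltn_trans.
rewrite pairwise_cat => /and3P[/allrelP ar p1 p2].
have so1 : sorted ltn s1 by rewrite sorted_pairwise //; exact: ltn_trans.
have IH1 := IH s1 vT UT S1 so1.
rewrite count_cat heads_cons.
case: eqP => [r0|/eqP rn].
  by move: S2; rewrite r0 subseq0 => /eqP ->; rewrite addn0.
have hr : head 0 r \in r by case: r rn {sr rl v U S2 dis ar Ur S IH1} => //= b r _; exact: mem_head.
set h := head 0 r in hr *.
have -> : count (fun a => a \in h :: heads T) s1 = count (fun a => a \in heads T) s1.
  apply: eq_in_count => a as1; rewrite in_cons.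
  have : a != h by apply/eqP => ah; move: (dis h hr); rewrite -ah (mem_subseq S1 as1).
  by move/negbTE => ->.
have -> : count (fun a => a \in h :: heads T) s2 = count (pred1 h) s2.
  apply: eq_in_count => a as2; rewrite in_cons /=.
  have : a \notin heads T.
    apply/negP => /mem_heads; rewrite -(perm_mem (perm_read T)) => aT.
    by move: (dis a (mem_subseq S2 as2)); rewrite aT.
  by move/negbTE => ->; rewrite orbF.
have Us2 : uniq s2 := subseq_uniq S2 Ur.
case: (boolP (h \in s2)) => hs2.
  have -> : count (fun a => a \in heads T) s1 = 0.
    apply/eqP; rewrite -leqn0 leqNgt -has_count; apply/hasPn => a as1; apply/negP => aH.
    have := allP (heads_gt v rn) a aH; rewrite -/h => ha.
    by have := ltn_trans ha (ar a h as1 hs2); rewrite ltnn.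
  by rewrite add0n (count_uniq_mem _ Us2) hs2.
by move/count_memPn: hs2 => ->; rewrite addn0.
Qed.

Lemma count_flatten_le1 (a : pred nat) (F : seq (seq nat)) :
  (forall s, s \in F -> count a s <= 1) -> count a (flatten F) <= size F.
Proof.
elim: F => //= s F IH H; rewrite count_cat -add1n.
apply: leq_add; first by apply: H; exact: mem_head.
by apply: IH => t tF; apply: H; rewrite in_cons tF orbT.
Qed.

Lemma count_uniq_le (hs s : seq nat) : uniq s -> count (fun x => x \in hs) s <= size hs.
Proof.
move=> Us; rewrite -size_filter; apply: uniq_leq_size; first exact: filter_uniq.
by move=> x; rewrite mem_filter => /andP[].
Qed.

Lemma flat_nil T : count nonE T = 0 -> flatten T = [::].
Proof. by elim: T => //= r T IH; rewrite /nonE; case: r => //= _ /IH. Qed.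

Lemma famB_aux n : forall T k F, size (flatten T) <= n -> valid T -> uniq (read T) ->
  famP k (read T) F -> size (flatten F) <= Lam k T.
Proof.
elim: n => [|n IH] T k F sT v U fF.
  have fT : flatten T = [::] by apply/eqP; rewrite -size_eq0 -leqn0.
  have rT : read T = [::].
    by apply/eqP; rewrite -size_eq0 (perm_size (perm_read T)) fT.
  move: fF; rewrite rT /famP => /and3P[_ /allP aF _].
  suff -> : flatten F = [::] by [].
  elim: F aF => //= s F IHF aF.
  have /andP[ss _] := aF s (mem_head _ _); move: ss => /eqP ->.
  by rewrite IHF // => t tF; apply: aF; rewrite in_cons tF orbT.
case: (posnP (count nonE T)) => cT.
  apply: (IH T) => //; by rewrite (flat_nil cT).
set P := fun a => a \notin heads T.
have fF'' : famP k (read (map behead T)) (map (filter P) F).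
  move: fF => /and3P[szF /allP aF UF]; apply/and3P; split.
  - by rewrite size_map.
  - apply/allP => s' /mapP[s sF ->]; have /andP[ss so] := aF s sF.
    rewrite (sorted_filter ltn_trans) // andbT read_behead // subseq_filter filter_all /=.
    exact: subseq_trans (filter_subseq _ _) ss.
  - by rewrite -filter_flatten filter_uniq.
have IH1 := IH _ k _ _ (valid_behead v) _ fF''.
move: fF => /and3P[szF /allP aF UF].
rewrite -(count_predC P (flatten F)) (Lam_behead k T).
apply: leq_add.
  rewrite -size_filter filter_flatten; apply: IH1.
    by move: sT; rewrite (size_flatten_behead T); lia.
  by rewrite read_behead // filter_uniq.
have -> : count (predC P) (flatten F) = count (fun a => a \in heads T) (flatten F).
  by apply: eq_count => a; rewrite /= /P negbK.
rewrite count_take_nonE // leq_min; apply/andP; split.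
  apply: (leq_trans _ szF); apply: count_flatten_le1 => s sF.
  by have /andP[ss so] := aF s sF; exact: col_count.
have -> : count nonE T = size (heads T) by rewrite /heads size_map size_filter.
exact: count_uniq_le.
Qed.

Lemma famB T k F : valid T -> uniq (read T) -> famP k (read T) F -> size (flatten F) <= Lam k T.
Proof. exact: (famB_aux (leqnn _)). Qed.
Lemma greeneA w k : uniq w -> exists F, famP k w F /\ size (flatten F) = Lam k (rsk_P w).
Proof.
move=> Uw; have [vP kP] := rsk_inv Uw.
have Ur : uniq (read (rsk_P w)) by rewrite -(perm_uniq (knuth_perm kP)).
have [fA sA] := famA k Ur (valid_sorted vP).
have [F [fF sF]] := knuth_fam (knuth_sym kP) Ur fA.
by exists F; rewrite sF.
Qed.

Lemma greeneB w k F : uniq w -> famP k w F -> size (flatten F) <= Lam k (rsk_P w).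
Proof.
move=> Uw fF; have [vP kP] := rsk_inv Uw.
have Ur : uniq (read (rsk_P w)) by rewrite -(perm_uniq (knuth_perm kP)).
have [F' [fF' sF']] := knuth_fam kP Uw fF.
by rewrite -sF'; exact: famB fF'.
Qed.

Definition sw (k a : nat) : nat := if a == k then k.+1 else if a == k.+1 then k else a.

Lemma sw_inv k : involutive (sw k).
Proof.
move=> a; rewrite /sw; case: (a =P k) => [->|ak]; first by rewrite eqxx (gtn_eqF (ltnSn k)) ?eqxx.
case: (a =P k.+1) => [->|ak1]; first by rewrite eqxx ?eqxx.
by move/eqP/negbTE: ak => ->; move/eqP/negbTE: ak1 => ->.
Qed.

Lemma sw_inj k : injective (sw k).
Proof. exact: inv_inj (sw_inv k). Qed.

Lemma idx_order w s a b : uniq w -> subseq s w -> sorted ltn s -> a \in s -> b \in s -> a < b ->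
  index a w < index b w.
Proof.
move=> U S so ais bis ab; rewrite ltnNge; apply/negP => ba.
have aw : a \in w := mem_subseq S ais.
have bw : b \in w := mem_subseq S bis.
have neq : b != a by rewrite (gtn_eqF ab).
have ba' : index b w < index a w.
  rewrite ltn_neqAle ba andbT; apply/negP => /eqP e.
  by move: neq; rewrite -(nth_index 0 aw) -e nth_index // eqxx.
have iw : index a w < size w by rewrite index_mem.
have E := subseq_filt U S.
rewrite -(cat_take_drop (index a w) w) filter_cat in E.
have bt : b \in take (index a w) w.
  by rewrite -(nth_index 0 bw) -(nth_take 0 ba') mem_nth // size_take iw.
have ad : a \in drop (index a w) w by rewrite (drop_nth 0 iw) nth_index // mem_head.
move: so; rewrite E sorted_pairwise; last exact: ltn_trans.
rewrite pairwise_cat => /and3P[/allrelP ar _ _].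
have := ar b a; rewrite !mem_filter bis ais bt ad => /(_ isT isT) ltba.
by have := ltn_trans ab ltba; rewrite ltnn.
Qed.

Lemma index_sw w k a : index (sw k a) (map (sw k) w) = index a w.
Proof. exact: (index_map (@sw_inj k) w a). Qed.

Lemma sw_homo1 k x y : x < y -> ~~ ((x == k) && (y == k.+1)) -> sw k x < sw k y.
Proof.
rewrite /sw => xy; case: (x =P k) => [e1|n1]; case: (x =P k.+1) => [e2|n2];
case: (y =P k) => [e3|n3]; case: (y =P k.+1) => [e4|n4] //= *; lia.
Qed.

Lemma sw_homo2 k x y : x < y -> x != k -> sw k x < sw k y.
Proof.
move=> xy xk; apply: sw_homo1 => //; by rewrite (negbTE xk).
Qed.

Lemma swap_greene w k j : uniq w -> k \in w -> k.+1 \in w -> index k w < index k.+1 w ->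
  Lam j (rsk_P (map (sw k) w)) <= Lam j (rsk_P w) /\
  Lam j (rsk_P w) <= Lam j (rsk_P (map (sw k) w)) + 1.
Proof.
move=> U kw k1w ik.
have U' : uniq (map (sw k) w) by rewrite map_inj_uniq //; exact: sw_inj.
have ew : map (sw k) (map (sw k) w) = w := mapK (sw_inv k) w.
have swk : sw k k = k.+1 by rewrite /sw eqxx.
have swk1 : sw k k.+1 = k by rewrite /sw (gtn_eqF (ltnSn k)) eqxx.
split.
- have [F [fF sF]] := greeneA j U'; rewrite -sF.
  have -> : size (flatten F) = size (flatten (map (map (sw k)) F)) by rewrite -map_flatten size_map.
  apply: greeneB U _.
  move: fF => /and3P[szF /allP aF UF]; apply/and3P; split.
  + by rewrite size_map.
  + apply/allP => t /mapP[s sF0 ->]; have /andP[ss so] := aF s sF0.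
    have nb : ~~ ((k \in s) && (k.+1 \in s)).
      apply/negP => /andP[ks k1s]; have := idx_order U' ss so ks k1s (ltnSn k).
      have i1 := index_sw w k k.+1; rewrite swk1 in i1.
      have i2 := index_sw w k k; rewrite swk in i2.
      rewrite i1 i2 => h.
      by move: ik; rewrite ltnNge ltnW.
    apply/andP; split.
      by rewrite -ew; exact: map_subseq.
    have aS : all (fun x => x \in s) s by apply/allP.
    apply: (homo_sorted_in _ aS so) => x y xs ys xy; apply: sw_homo1 => //; apply/negP => /andP[/eqP ek /eqP ek1].
    by move: xs ys nb; rewrite ek ek1 => -> ->.
  + by rewrite -map_flatten map_inj_uniq //; exact: sw_inj.
- have [F [fF sF]] := greeneA j U; rewrite -sF.
  move: fF => /and3P[szF /allP aF UF].
  set F'' := map (map (sw k)) (map (filter (predC1 k)) F).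
  have eF : flatten F'' = map (sw k) (filter (predC1 k) (flatten F)).
    by rewrite /F'' -map_flatten filter_flatten.
  have f'' : famP j (map (sw k) w) F''.
    apply/and3P; split.
    + by rewrite !size_map.
    + apply/allP => t /mapP[s' /mapP[s sF0 ->] ->]; have /andP[ss so] := aF s sF0.
      apply/andP; split.
        apply: map_subseq; exact: subseq_trans (filter_subseq _ _) ss.
      have aS : all (fun x => x \in filter (predC1 k) s) (filter (predC1 k) s) by apply/allP.
      apply: (homo_sorted_in _ aS (sorted_filter ltn_trans _ so)).
      move=> x y; rewrite mem_filter => /andP[xk _] _ xy; exact: sw_homo2.
    + by rewrite eF map_inj_uniq ?filter_uniq //; exact: sw_inj.
  apply: (@leq_trans (size (flatten F'') + 1)); last by rewrite leq_add2r; exact: greeneB U' f''.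
  rewrite eF size_map size_filter -(count_predC (predC1 k) (flatten F)) leq_add2l.
  have -> : count (predC (predC1 k)) (flatten F) = count_mem k (flatten F).
    by apply: eq_count => a; rewrite /= negbK.
  by rewrite (count_uniq_mem _ UF); case: (k \in flatten F).
Qed.
Definition dn (x y : nat) : nat := (x - y) + (y - x).
Definition dl (N : nat) (a b : seq nat) : nat := \sum_(i < N) dn (nth 0 a i) (nth 0 b i).
Definition nonincr (a : seq nat) : Prop := forall i, nth 0 a i.+1 <= nth 0 a i.

Lemma dl_sym N a b : dl N a b = dl N b a.
Proof. by apply: eq_bigr => i _; rewrite /dn addnC. Qed.

Lemma dlS N a b : dl N.+1 a b = dn (head 0 a) (head 0 b) + dl N (behead a) (behead b).
Proof.
rewrite /dl big_ord_recl !nth0; congr (_ + _).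
by apply: eq_bigr => i _; rewrite !nth_behead.
Qed.

Lemma sumn_head (a : seq nat) : sumn a = head 0 a + sumn (behead a).
Proof. by case: a. Qed.

Lemma sumn_takeS (a : seq nat) j : sumn (take j.+1 a) = head 0 a + sumn (take j (behead a)).
Proof. by case: a. Qed.

Lemma nonincr_behead a : nonincr a -> nonincr (behead a).
Proof. by move=> h i; rewrite !nth_behead. Qed.

Lemma nonincr_head a : nonincr a -> head 0 (behead a) <= head 0 a.
Proof. by move=> h; have := h 0; rewrite -!nth0 nth_behead. Qed.

Lemma sumn_take_big (a : seq nat) j : size a <= j -> sumn (take j a) = sumn a.
Proof. by move=> h; rewrite take_oversize. Qed.

Lemma part_lemma N : forall a b, nonincr a -> nonincr b ->
  (forall j, sumn (take j b) <= sumn (take j a) <= sumn (take j b) + 1) ->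
  (dl N a b) ^ 2 + (sumn a - sumn b) <= 2 * sumn a /\ dl N a b <= head 0 a.
Proof.
elim: N => [|N IH] a b na nb H.
  by rewrite /dl big_ord0; split => //; lia.
have H1 := H 1; rewrite !sumn_takeS !take0 /= !addn0 in H1.
have Hall := H (size a + size b).
rewrite !sumn_take_big ?leq_addl ?leq_addr // in Hall.
have H' : forall j, sumn (take j (behead b)) + head 0 b <= sumn (take j (behead a)) + head 0 a
           <= sumn (take j (behead b)) + head 0 b + 1.
  by move=> j; have := H j.+1; rewrite !sumn_takeS; rewrite (addnC (head 0 b)) (addnC (head 0 a)).
rewrite dlS (sumn_head a) (sumn_head b).
rewrite (sumn_head a) (sumn_head b) in Hall.
have ha := nonincr_head na; have hb := nonincr_head nb.
move: (na) (nb) => /nonincr_behead na' /nonincr_behead nb'.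
case/andP: H1 => h1 h2; rewrite leq_eqVlt in h1.
case/orP: h1 => [/eqP e|h1].
  have Hj : forall j, sumn (take j (behead b)) <= sumn (take j (behead a)) <= sumn (take j (behead b)) + 1.
    by move=> j; have := H' j; rewrite e; lia.
  have [IH1 IH2] := IH _ _ na' nb' Hj.
  have -> : dn (head 0 a) (head 0 b) = 0 by rewrite /dn e subnn.
  rewrite add0n; split; last exact: leq_trans IH2 ha.
  move: IH1; move: (dl N (behead a) (behead b) ^ 2) => X; lia.
have e : head 0 a = (head 0 b).+1 by lia.
have Hj : forall j, sumn (take j (behead a)) <= sumn (take j (behead b)) <= sumn (take j (behead a)) + 1.
  by move=> j; have := H' j; rewrite e; lia.
have [IH1 IH2] := IH _ _ nb' na' Hj.
rewrite dl_sym in IH1 IH2.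
have -> : dn (head 0 a) (head 0 b) = 1 by rewrite /dn e; lia.
have hD : dl N (behead a) (behead b) + 1 <= head 0 a by lia.
split; last by lia.
have -> : (1 + dl N (behead a) (behead b)) ^ 2 = dl N (behead a) (behead b) ^ 2 + 2 * dl N (behead a) (behead b) + 1.
  by rewrite !expnS expn0; lia.
move: IH1 hD Hall; move: (dl N (behead a) (behead b) ^ 2) (dl N (behead a) (behead b)) => X D.
rewrite e; lia.
Qed.
Lemma valid_nonincr T : valid T -> nonincr (map size T).
Proof.
elim: T => [|r T IH] v i; first by rewrite !nth_nil.
case: i => [|i] /=.
  by case: T v {IH} => //= c T /and3P[_ /rowltP[h _] _].
by apply: IH; case/and3P: v.
Qed.

Lemma shape_sum w : uniq w -> sumn (map size (rsk_P w)) = size w.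
Proof.
move=> U; have [_ kP] := rsk_inv U.
by rewrite (perm_size (knuth_perm kP)) (perm_size (perm_read _)) size_flatten.

Qed.

Lemma core w k : uniq w -> k \in w -> k.+1 \in w -> index k w < index k.+1 w ->
  (dl (size w) (map size (rsk_P w)) (map size (rsk_P (map (sw k) w)))) ^ 2 <= 2 * size w.
Proof.
move=> U kw k1w ik.
have U' : uniq (map (sw k) w) by rewrite map_inj_uniq //; exact: sw_inj.
have [vP _] := rsk_inv U; have [vP' _] := rsk_inv U'.
have H : forall j, sumn (take j (map size (rsk_P (map (sw k) w)))) <= sumn (take j (map size (rsk_P w)))
   <= sumn (take j (map size (rsk_P (map (sw k) w)))) + 1.
  by move=> j; have [h1 h2] := swap_greene j U kw k1w ik; rewrite /Lam in h1 h2; rewrite h1 h2.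
have [h _] := part_lemma (size w) (valid_nonincr vP) (valid_nonincr vP') H.
move: h; rewrite shape_sum //; lia.
Qed.

Lemma core2 w k : uniq w -> k \in w -> k.+1 \in w ->
  (dl (size w) (map size (rsk_P w)) (map size (rsk_P (map (sw k) w)))) ^ 2 <= 2 * size w.
Proof.
move=> U kw k1w.
case: (ltngtP (index k w) (index k.+1 w)) => h.
- exact: core.
- have U' : uniq (map (sw k) w) by rewrite map_inj_uniq //; exact: sw_inj.
  have ew : map (sw k) (map (sw k) w) = w := mapK (sw_inv k) w.
  have swk : sw k k = k.+1 by rewrite /sw eqxx.
  have swk1 : sw k k.+1 = k by rewrite /sw (gtn_eqF (ltnSn k)) eqxx.
  have kw' : k \in map (sw k) w by have := map_f (sw k) k1w; rewrite swk1.
  have k1w' : k.+1 \in map (sw k) w by have := map_f (sw k) kw; rewrite swk.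
  have i1 := index_sw w k k.+1; rewrite swk1 in i1.
  have i2 := index_sw w k k; rewrite swk in i2.
  have := core U' kw' k1w'; rewrite i1 i2 => /(_ h).
  by rewrite ew size_map dl_sym.
- have : nth 0 w (index k w) = nth 0 w (index k.+1 w) by rewrite h.
  by rewrite !nth_index // => /eqP; rewrite (ltn_eqF (ltnSn k)).
Qed.

Lemma one_line_uniq n (pi : 'S_n) : uniq (one_line pi).
Proof. by rewrite /one_line map_inj_uniq ?enum_uniq // => x y /val_inj; exact: perm_inj. Qed.

Lemma one_line_mem n (pi : 'S_n) k : (k \in one_line pi) = (k < n).
Proof.
apply/mapP/idP => [[x _ ->]|kn]; first exact: ltn_ord.
by exists ((pi^-1)%g (Ordinal kn)); [rewrite mem_enum | rewrite permKV].
Qed.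

Lemma size_one_line n (pi : 'S_n) : size (one_line pi) = n.
Proof. by rewrite /one_line size_map size_enum_ord. Qed.

Lemma one_line_mul n (pi : 'S_n) (i j : 'I_n) : val j = (val i).+1 ->
  one_line (pi * tperm i j)%g = map (sw (val i)) (one_line pi).
Proof.
move=> ij; rewrite /one_line -map_comp; apply: eq_map => x /=; rewrite permM.
case: tpermP => [->|->|zi zj]; rewrite /sw.
- by rewrite eqxx ij.
- by rewrite ij (gtn_eqF (ltnSn _)) eqxx.
- have -> : (val (pi x) == val i) = false by apply/negP => /eqP /val_inj.
  by rewrite -ij; have -> : (val (pi x) == val j) = false by apply/negP => /eqP /val_inj.
Qed.

Local Open Scope ring_scope.

Lemma abs_nat_dn (R : numDomainType) (x y : nat) : `|(x%:R - y%:R : R)| = (dn x y)%:R.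
Proof.
rewrite /dn; case: (leqP y x) => h.
  have -> : (y - x = 0)%N by apply/eqP; rewrite subn_eq0.
  by rewrite addn0 natrB // ger0_norm // subr_ge0 ler_nat.
have h' := ltnW h.
have -> : (x - y = 0)%N by apply/eqP; rewrite subn_eq0.
by rewrite add0n natrB // -opprB normrN ger0_norm // subr_ge0 ler_nat.
Qed.

Lemma Delta_dl (R : numDomainType) n la mu : Delta R n la mu = (dl n la mu)%:R / 2%:R.
Proof.
rewrite /Delta /dl natr_sum; congr (_ / _); apply: eq_bigr => i _; exact: abs_nat_dn.
Qed.

Lemma Delta_tri (R : numDomainType) n a b c : Delta R n a c <= Delta R n a b + Delta R n b c.
Proof.
rewrite /Delta -mulrDl; apply: ler_wpM2r; first by rewrite invr_ge0 ler0n.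
rewrite -big_split /=; apply: ler_sum => i _; exact: ler_distD.
Qed.

Lemma Delta_self (R : numDomainType) n a : Delta R n a a = 0.
Proof. by rewrite /Delta big1 ?mul0r // => i _; rewrite subrr normr0. Qed.

Lemma Delta_le_sqrt (R : rcfType) n (D : nat) : (D ^ 2 <= 2 * n)%N ->
  (D%:R / 2%:R : R) <= Num.sqrt (n%:R / 2%:R).
Proof.
move=> h.
have h2 : (D%:R ^+ 2 <= 2%:R * n%:R :> R) by rewrite -natrX -natrM ler_nat.
have p : (0 : R) <= D%:R / 2%:R by rewrite divr_ge0 // ler0n.
rewrite -(ger0_norm p) -sqrtr_sqr ler_sqrt; last by rewrite divr_ge0 // ler0n.
rewrite expr_div_n.
move: h2; move: (D%:R ^+ 2 : R) (n%:R : R) => X y hX.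
rewrite expr2; lra.
Qed.

Lemma step_bound (R : rcfType) n (pi : 'S_n) (ij : 'I_n * 'I_n) : val ij.2 = (val ij.1).+1 ->
  Delta R n (rsk_shape pi) (rsk_shape (left_mul_tperm ij pi)) <= Num.sqrt (n%:R / 2%:R).
Proof.
case: ij => i j /= ij; rewrite /rsk_shape /left_mul_tperm /= one_line_mul // Delta_dl.
apply: Delta_le_sqrt.
have := @core2 (one_line pi) (val i) (one_line_uniq pi).
rewrite !one_line_mem size_one_line ltn_ord -ij ltn_ord; exact.
Qed.

Lemma path_bound (R : rcfType) n (pi : 'S_n) (ks : seq ('I_n * 'I_n)) :
  all (fun ij => val ij.2 == (val ij.1).+1) ks ->
  Delta R n (rsk_shape pi) (rsk_shape (foldl (fun p ij => left_mul_tperm ij p) pi ks))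
    <= (size ks)%:R * Num.sqrt (n%:R / 2%:R).
Proof.
elim: ks pi => [|ij ks IH] pi /=; first by rewrite Delta_self mul0r.
move=> /andP[/eqP hij aks].
apply: (le_trans (Delta_tri R n _ (rsk_shape (left_mul_tperm ij pi)) _)).
rewrite -add1n natrD mulrDl mul1r; apply: lerD; first exact: step_bound.
exact: IH.
Qed.

Unset Implicit Arguments. Set Strict Implicit.

Theorem theorem5 (R : rcfType) (n t : nat) (pi tau : 'S_n) :
  adj_dist pi tau t ->
  Delta R n (rsk_shape pi) (rsk_shape tau) <= t%:R * Num.sqrt (n%:R / 2%:R).
Proof.
case=> [[ks [<- aks <-]] _]; exact: path_bound.
Qed.
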